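(* Let $f(x)=\frac1n\sum_{i=1}^nf_i(x)$ on $\mathbb{R}^d$ where each $f_i$ is lower bounded and $L_i$-smooth, and let $(c_k)_{k\ge0}$ be any non-decreasing positive sequence of real numbers. Under the DecSPS stepsize (defined in the context), for every $k\in\mathbb{N}$, $$\min\left\{\frac1{2c_kL_{\max}},\frac{c_0\gamma_b}{c_k}\right\}\le\gamma_k\le\frac{c_0\gamma_b}{c_k},$$ where $L_{\max}=\max_iL_i$, and moreover $\gamma_k\le\gamma_{k-1}$.
   Context: For $\mathcal S\subseteq[n]$, $f_{\mathcal S}:=\frac1{|\mathcal S|}\sum_{i\in\mathcal S}f_i$, $f^*_{\mathcal S}:=\inf_xf_{\mathcal S}(x)$, and $\ell^*_{\mathcal S}$ is a given real number with $\ell^*_{\mathcal S}\le f^*_{\mathcal S}$. Given any sequence of minibatches $\mathcal S_k\subseteq[n]$ and points $x^k$ (the SGD iterates $x^{k+1}=x^k-\gamma_k\nabla f_{\mathcal S_k}(x^k)$) with $\nabla f_{\mathcal S_k}(x^k)\ne0$, the DecSPS stepsize is $\gamma_k:=\frac1{c_k}\min\left\{\frac{f_{\mathcal S_k}(x^k)-\ell^*_{\mathcal S_k}}{\|\nabla f_{\mathcal S_k}(x^k)\|^2},\ c_{k-1}\gamma_{k-1}\right\}$ for $k\ge0$, with $c_{-1}=c_0$ and $\gamma_{-1}=\gamma_b>0$ a fixed constant. *)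

(* Defs.v *)
From HB Require Import structures.
From mathcomp Require Import all_boot all_order all_algebra.
From mathcomp Require Import all_classical all_reals all_analysis.
Set Implicit Arguments. Unset Strict Implicit. Unset Printing Implicit Defensive.
Import Order.TTheory GRing.Theory Num.Theory.
Import numFieldNormedType.Exports.
Local Open Scope ring_scope.

Definition enorm {R : realType} {d : nat} (v : 'rV[R]_d) : R :=
  Num.sqrt (\sum_(j < d) v 0 j ^+ 2).

Definition grad {R : realType} {d : nat} (f : 'rV[R]_d -> R) (x : 'rV[R]_d)
  : 'rV[R]_d := \row_(j < d) ('d f x (delta_mx 0 j : 'rV[R]_d)).

Definition Lsmooth {R : realType} {d : nat} (L : R) (f : 'rV[R]_d -> R) : Prop :=
  (forall x, differentiable f x) /\
  (forall x y, enorm (grad f x - grad f y) <= L * enorm (x - y)).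

Definition lower_bounded {R : realType} {d : nat} (f : 'rV[R]_d -> R) : Prop :=
  exists b : R, forall x, b <= f x.

Definition fS {R : realType} {n d : nat} (f : 'I_n -> 'rV[R]_d -> R)
  (S : {set 'I_n}) (x : 'rV[R]_d) : R :=
  (#|S|%:R)^-1 * \sum_(i in S) f i x.

Definition Lmax {R : realType} {n : nat} (L : 'I_n -> R) : R :=
  \big[Num.max/0]_(i < n) L i.

(* c_{k-1} * gamma_{k-1}, with c_{-1} = c_0 and gamma_{-1} = gamma_b. *)
Definition prev_cg {R : realType} (c gamma : nat -> R) (gamma_b : R) (k : nat) : R :=
  if k is k'.+1 then c k' * gamma k' else c 0%N * gamma_b.

(* gamma_{k-1}, with gamma_{-1} = gamma_b. *)
Definition prev_gamma {R : realType} (gamma : nat -> R) (gamma_b : R) (k : nat) : R :=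
  if k is k'.+1 then gamma k' else gamma_b.

(* Main.v *)
Require Import Defs.
From HB Require Import structures.
From mathcomp Require Import all_boot all_order all_algebra.
From mathcomp Require Import all_classical all_reals all_analysis.
From mathcomp Require Import ring lra.
Import Order.TTheory GRing.Theory Num.Theory.
Import numFieldNormedType.Exports.
Local Open Scope ring_scope.

Section H.
Variables (R : realType) (d : nat).

Definition nsq (v : 'rV[R]_d) : R := \sum_(j < d) v 0 j ^+ 2.

Lemma nsq_ge0 v : 0 <= nsq v.
Proof. by apply: sumr_ge0 => j _; exact: sqr_ge0. Qed.

Lemma enorm_sq v : enorm v ^+ 2 = nsq v.
Proof. by rewrite /enorm sqr_sqrtr // nsq_ge0. Qed.

Lemma nsqZ (t : R) v : nsq (t *: v) = t ^+ 2 * nsq v.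
Proof.
rewrite /nsq mulr_sumr; apply: eq_bigr => j _; by rewrite mxE exprMn.
Qed.

Lemma nsq_eq0 v : nsq v = 0 -> v = 0.
Proof.
move=> /eqP; rewrite psumr_eq0; last by move=> j _; exact: sqr_ge0.
move=> /allP H; apply/rowP => j; rewrite mxE.
by have := H j (mem_index_enum j); rewrite /= sqrf_eq0 => /eqP.
Qed.
Definition D (G : 'rV[R]_d -> R) p v := 'd G p v.
Lemma D_grad (G : 'rV[R]_d -> R) (p w : 'rV[R]_d) :
  D G p w = \sum_(j < d) w 0 j * grad G p 0 j.
Proof.
rewrite /D {1}(row_sum_delta w) linear_sum; apply: eq_bigr => j _.
by rewrite linearZ /grad mxE.
Qed.
Lemma rowB (a b : 'rV[R]_d) j : (a - b) 0 j = a 0 j - b 0 j.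
Proof. by rewrite !mxE. Qed.
Lemma aux3 (a b c : R) : c * a - c * b = (a - b) * c.
Proof. by rewrite -mulrBr mulrC. Qed.
Lemma D_diff (G : 'rV[R]_d -> R) (p q v : 'rV[R]_d) :
  D G p v - D G q v = \sum_(j < d) (grad G p - grad G q) 0 j * v 0 j.
Proof.
rewrite (D_grad G p) (D_grad G q) -sumrB; apply: eq_bigr => j _.
rewrite rowB; exact: (aux3 (grad G p 0 j) (grad G q 0 j) (v 0 j)).
Qed.
Lemma amgm (a b e : R) : 0 < e -> a * b <= (a ^+ 2 / e + e * b ^+ 2) / 2.
Proof.
move=> e0.
have q0 : 0 <= (a - e * b) ^+ 2 / e by rewrite divr_ge0 // ?sqr_ge0 // ltW.
have eq : a * b * 2 = a ^+ 2 / e + e * b ^+ 2 - (a - e * b) ^+ 2 / e.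
  by field; rewrite gt_eqF.
lra.
Qed.
Lemma bound_step (a x v : 'rV[R]_d) (M t : R) : 0 < M -> 0 < t ->
  enorm a <= M * enorm (x + t *: v - x) -> \sum_(j < d) a 0 j * v 0 j <= M * t * nsq v.
Proof.
move=> M0 t0; have -> : x + t *: v - x = t *: v by rewrite addrC addKr.
move=> h1.
have Mt : 0 < M * t by rewrite mulr_gt0.
have Hs : \sum_(j < d) a 0 j * v 0 j <= (nsq a / (M * t) + M * t * nsq v) / 2.
  have H1 : \sum_(j < d) a 0 j * v 0 j <= \sum_(j < d) ((a 0 j) ^+ 2 / (M * t) + (M * t) * (v 0 j) ^+ 2) / 2.
    by apply: ler_sum => j _; exact: amgm.
  apply: (le_trans H1).
  by rewrite -mulr_suml big_split /= -mulr_suml -mulr_sumr.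
have Hna : nsq a <= M ^+ 2 * t ^+ 2 * nsq v.
  rewrite -enorm_sq.
  apply: le_trans (_ : (M * enorm (t *: v)) ^+ 2 <= _).
    by rewrite !expr2; apply: ler_pM => //; exact: sqrtr_ge0.
  by rewrite exprMn enorm_sq nsqZ mulrA.
have Hq : nsq a / (M * t) <= M * t * nsq v.
  rewrite ler_pdivrMr //; apply: (le_trans Hna); rewrite le_eqVlt; apply/orP; left; apply/eqP; ring.
lra.
Qed.
Lemma fin_alg (a b K t e : R) : a - b <= e -> e = K * (t + t) ->
  a - b%:A - K *: (t%:A + t%:A) <= 0.
Proof.
move=> h1 h2; rewrite -[K *: _]/(K * _) [b%:A]mulr1 [t%:A]mulr1 -h2; lra.
Qed.
Lemma descent (G : 'rV[R]_d -> R) (M : R) : 0 < M -> (forall p, differentiable G p) ->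
  (forall p q, enorm (grad G p - grad G q) <= M * enorm (p - q)) ->
  forall x v : 'rV[R]_d, G (x + v) <= G x + D G x v + M / 2 * nsq v.
Proof.
move=> M0 dG lip x v.
pose h := fun t : R => G (x + t *: v).
have hder t : is_derive t (1:R) h (D G (x + t *: v) v).
  have E : (fun s : R => s^-1 *: ((h \o shift t) (s *: 1) - h t)) =
     (fun s : R => s^-1 *: ((G \o shift (x + t *: v)) (s *: v) - G (x + t *: v))).
    apply/funext => s; rewrite /h /=; congr (_ *: (G _ - _)).
    by rewrite scalerDl [s *: 1]mulr1 addrCA.
  split; first by rewrite /derivable E; exact: diff_derivable.
  by have := deriveE v (dG (x + t *: v)); rewrite /derive E => ->.
set K := M / 2 * nsq v.
pose psi := h - (D G x v) \*: id - K \*: (id * id).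
have pder t : is_derive t (1:R) psi (D G (x + t *: v) v - (D G x v) *: 1 - K *: (t *: 1 + t *: 1)).
  exact: is_deriveB.
have mono := @ler0_derive1_le_cc R psi 0 1.
have key : psi 1 <= psi 0.
  apply: mono; rewrite ?in_itv /= ?ler01 ?lexx //.
  - move=> t; rewrite in_itv /= => /andP[t0 t1].
    rewrite derive1E derive_val.
    apply: (@fin_alg (D G (x + t *: v) v) (D G x v) K t (M * t * nsq v)).
      rewrite D_diff; apply: bound_step => //; exact: lip.
    by rewrite /K; field.
  - by apply: derivable_within_continuous => t _; by case: (pder t).
move: key; rewrite /psi /h !fctE /= scale1r scale0r addr0 !scaler0 mulr1 subr0.
rewrite [(D G x v)%:A]mulr1 [K *: 1]mulr1 mulr0 [K *: 0]mulr0 subr0; lra.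
Qed.
Lemma diff_bsum (I : Type) (r : seq I) (P : pred I) (h : I -> 'rV[R]_d -> R) (x : 'rV[R]_d) :
  (forall i, differentiable (h i) x) ->
  differentiable (fun y => \sum_(i <- r | P i) h i y) x /\
  forall w : 'rV[R]_d, D (fun y => \sum_(i <- r | P i) h i y) x w = \sum_(i <- r | P i) D (h i) x w.
Proof.
move=> dh; elim: r => [|i r [IH1 IH2]].
  have -> : (fun y => \sum_(i <- [::] | P i) h i y) = cst 0.
    by apply/funext => y; rewrite big_nil.
  split; first exact: differentiable_cst.
  by move=> w; rewrite big_nil /D diff_cst.
case Pi: (P i).
  have -> : (fun y => \sum_(j <- i :: r | P j) h j y) = h i + (fun y => \sum_(j <- r | P j) h j y).
    by apply/funext => y; rewrite big_cons Pi.
  split; first exact: differentiableD.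
  by move=> w; rewrite big_cons Pi -IH2 /D diffD.
have -> : (fun y => \sum_(j <- i :: r | P j) h j y) = (fun y => \sum_(j <- r | P j) h j y).
  by apply/funext => y; rewrite big_cons Pi.
by split => // w; rewrite big_cons Pi IH2.
Qed.

Lemma diff_fS n (f : 'I_n -> 'rV[R]_d -> R) (S : {set 'I_n}) (x : 'rV[R]_d) :
  (forall i, differentiable (f i) x) ->
  differentiable (fS f S) x /\
  forall w : 'rV[R]_d, D (fS f S) x w = (#|S|%:R)^-1 * \sum_(i in S) D (f i) x w.
Proof.
move=> df; have [H1 H2] := @diff_bsum 'I_n (index_enum 'I_n) (fun i => i \in S) f x df.
have -> : fS f S = (#|S|%:R)^-1 *: (fun y => \sum_(i in S) f i y) by [].
split; first exact: differentiableZ.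
by move=> w; rewrite /D diffZ //= -H2.
Qed.
Lemma sumZsq (c : R) (g : 'rV[R]_d) : \sum_(j < d) (c *: g) 0 j * g 0 j = c * nsq g.
Proof.
rewrite /nsq mulr_sumr; apply: eq_bigr => j _; by rewrite mxE expr2 mulrA.
Qed.

Lemma cK (c K s : R) : c * s = 1 -> c * (K * s) = K.
Proof. by move=> h; rewrite mulrCA h mulr1. Qed.

Lemma Lmax_ge n (L : 'I_n -> R) i : L i <= Lmax L.
Proof. by rewrite /Lmax (bigD1 i) //= le_max lexx. Qed.

Lemma A_lb n (f : 'I_n -> 'rV[R]_d -> R) (L : 'I_n -> R)
  (hsm : forall i, Lsmooth (L i) (f i)) (ell : {set 'I_n} -> R)
  (hell : forall S x, ell S <= fS f S x) (S : {set 'I_n}) (hS : S != finset.set0)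
  (x : 'rV[R]_d) (g0 : grad (fS f S) x != 0) :
  (2 * Lmax L)^-1 <= (fS f S x - ell S) / enorm (grad (fS f S) x) ^+ 2.
Proof.
set g := grad (fS f S) x.
have N0 : 0 < nsq g.
  rewrite lt_def nsq_ge0 andbT; apply/eqP => /nsq_eq0 H; by move: g0; rewrite -/g H eqxx.
have Fl : 0 <= fS f S x - ell S by rewrite subr_ge0.
case: (leP (Lmax L) 0) => [Mle|M0].
  apply: le_trans (_ : 0 <= _); last by rewrite divr_ge0 // enorm_sq ltW.
  by rewrite invr_le0 pmulr_rle0.
set M := Lmax L.
have dfi i : forall p, differentiable (f i) p by case: (hsm i).
set v := (- M^-1) *: g.
have desc i : f i (x + v) <= f i x + D (f i) x v + M / 2 * nsq v.
  apply: descent => //.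
  move=> p q; case: (hsm i) => _ /(_ p q) H; apply: (le_trans H).
  by apply: ler_wpM2r; [exact: sqrtr_ge0 | exact: Lmax_ge].
have [_ dF] := @diff_fS n f S x (fun i => dfi i x).
have cS : (0 < #|S|)%N by rewrite card_gt0.
set c := (#|S|%:R : R)^-1.
have c0 : 0 < c by rewrite invr_gt0 ltr0n.
have cS1 : c * (#|S|%:R) = 1 by rewrite mulVf // pnatr_eq0 -lt0n.
have Hsum : fS f S (x + v) <= fS f S x + D (fS f S) x v + M / 2 * nsq v.
  rewrite dF /fS -/c.
  have H1 : \sum_(i in S) f i (x + v) <= \sum_(i in S) (f i x + D (f i) x v + M / 2 * nsq v).
    by apply: ler_sum => i _; exact: desc.
  rewrite !big_split /= sumr_const in H1.
  have := ler_wpM2l (ltW c0) H1.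
  by rewrite -(mulr_natr (M / 2 * nsq v)) !mulrDr (@cK _ (M / 2 * nsq v) _ cS1).

have HD : D (fS f S) x v = - M^-1 * nsq g.
  by rewrite (D_grad (fS f S) x v) (sumZsq (- M^-1) g).
have Hv : nsq v = M^-1 ^+ 2 * nsq g by rewrite nsqZ sqrrN.
have He := hell S (x + v).
rewrite HD Hv in Hsum.
rewrite enorm_sq -/g ler_pdivlMr //.
have E : (2 * M)^-1 * nsq g = M^-1 * nsq g - M / 2 * (M^-1 ^+ 2 * nsq g).
  by field; rewrite gt_eqF.
rewrite E; lra.
Qed.
Lemma mm1 (m a C b : R) : m <= a -> Num.min m C <= b -> Num.min m C <= Num.min a b.
Proof. by move=> h1 h2; rewrite le_min h2 andbT ge_min h1. Qed.
Lemma min_le_r (a b : R) : Num.min a b <= b.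
Proof. by rewrite ge_min lexx orbT. Qed.
Lemma min_ge0 (a b : R) : 0 <= a -> 0 <= b -> 0 <= Num.min a b.
Proof. by move=> h1 h2; rewrite le_min h1 h2. Qed.
Lemma G1h (ck Lm C g : R) : 0 < ck -> Num.min ((2 * Lm)^-1) C <= ck * g ->
  Num.min ((2 * ck * Lm)^-1) (C / ck) <= g.
Proof.
move=> c0 h.
have -> : (2 * ck * Lm)^-1 = (2 * Lm)^-1 / ck by rewrite mulrAC invfM.
move: h; rewrite !ge_min => /orP[h|h]; apply/orP; [left|right];
  by rewrite ler_pdivrMr // [g * _]mulrC.
Qed.
Lemma G2h (ck C g : R) : 0 < ck -> ck * g <= C -> g <= C / ck.
Proof. by move=> c0 h; rewrite ler_pdivlMr // mulrC. Qed.
Lemma G3h (c1 c2 g1 g2 : R) : 0 < c2 -> c1 <= c2 -> 0 <= g1 -> c2 * g2 <= c1 * g1 -> g2 <= g1.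
Proof.
move=> c20 c12 g10 h.
have : c2 * g2 <= c2 * g1 by apply: (le_trans h); exact: ler_wpM2r.
by rewrite ler_pM2l.
Qed.
End H.

Theorem lemma1 (R : realType) (n d : nat)
  (f : 'I_n -> 'rV[R]_d -> R) (L : 'I_n -> R)
  (hlb : forall i, lower_bounded (f i))
  (hsm : forall i, Lsmooth (L i) (f i))
  (c : nat -> R) (hcpos : forall k, 0 < c k)
  (hcmon : forall k, c k <= c k.+1)
  (ell : {set 'I_n} -> R)
  (hell : forall S x, ell S <= fS f S x)
  (S : nat -> {set 'I_n}) (hSne : forall k, S k != finset.set0)
  (x : nat -> 'rV[R]_d) (gamma : nat -> R) (gamma_b : R) (hgb : 0 < gamma_b)
  (hgrad : forall k, grad (fS f (S k)) (x k) != 0)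
  (hx : forall k, x k.+1 = x k - gamma k *: grad (fS f (S k)) (x k))
  (hgamma : forall k, gamma k =
     (c k)^-1 * Num.min
       ((fS f (S k) (x k) - ell (S k)) / (enorm (grad (fS f (S k)) (x k))) ^+ 2)
       (prev_cg c gamma gamma_b k)) :
  forall k : nat,
    Num.min ((2 * c k * Lmax L)^-1) (c 0%N * gamma_b / c k) <= gamma k
    /\ gamma k <= c 0%N * gamma_b / c k
    /\ gamma k <= prev_gamma gamma gamma_b k.
Proof.
pose A k := (fS f (S k) (x k) - ell (S k)) / (enorm (grad (fS f (S k)) (x k))) ^+ 2.
have A0 k : 0 <= A k.
  by rewrite /A divr_ge0 ?sqr_ge0 // subr_ge0.
have Alb k : (2 * Lmax L)^-1 <= A k by exact: A_lb.
have cg k : c k * gamma k = Num.min (A k) (prev_cg c gamma gamma_b k).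
  by rewrite {1}(hgamma k) mulVKf // gt_eqF.
set C := c 0%N * gamma_b.
have C0 : 0 <= C by rewrite mulr_ge0 // ltW.
have Q k : [/\ Num.min ((2 * Lmax L)^-1) C <= c k * gamma k, c k * gamma k <= C
           & 0 <= c k * gamma k].
  elim: k => [|k [IH1 IH2 IH3]].
    rewrite cg /=; split.
    - by apply: mm1; [exact: Alb | exact: min_le_r].
    - exact: min_le_r.
    - exact: min_ge0.
  rewrite cg /=; split.
  - by apply: mm1; [exact: Alb | exact: IH1].
  - by apply: le_trans IH2; exact: min_le_r.
  - exact: min_ge0.
move=> k; have [Q1 Q2 Q3] := Q k; split; first exact: G1h.
split; first exact: G2h.
case: k Q1 Q2 Q3 => [|k] Q1 Q2 Q3 /=.
  by rewrite -(ler_pM2l (hcpos 0%N)).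
have [_ _ Q3'] := Q k.
change (gamma k.+1 <= gamma k); apply: (@G3h R (c k) (c k.+1) (gamma k) (gamma k.+1) (hcpos k.+1) (hcmon k)).
  by rewrite -(pmulr_rge0 _ (hcpos k)).
by rewrite cg /=; exact: min_le_r.
Qed.
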